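(* Let $\mathcal C$ be a sub-$\sigma$-algebra of $\mathcal F$, let $G(y;\omega)$ be a regular conditional distribution function of $X_1$ given $\mathcal C$ (so $G(\cdot;\omega)$ is a distribution function for each $\omega$ and $G(y;\cdot)=P(X_1\le y\mid\mathcal C)$ a.s.), and let $g(y)=P(\{\omega:G(y;\omega)=1\})$, $y\in\mathbb{R}$. If $g(\xi_p)<p$, then there exist $\delta,\varepsilon\in(0,1)$ such that for all $t\in\mathbb{R}$, $$\sup_{|y-\xi_p|\le\delta}E\big|E\{\exp(\iota tI(X_1\le y))\mid\mathcal C\}\big|\le1-(1-|\Psi_\varepsilon(t)|)\delta,$$ where $\Psi_a(t)=ae^{\iota t}+1-a$ for $a\in(0,1)$.
   Context: $X_1$ is a real random variable on $(\Omega,\mathcal F,P)$ with distribution function $F$; $p\in(0,1)$, $\xi_p=F^{-1}(p)=\inf\{x:F(x)\ge p\}$, and $F$ is continuous at $\xi_p$ (so $F(\xi_p)=p$). $\iota=\sqrt{-1}$, and $I(\cdot)$ denotes the indicator function. *)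

(* Defs.v *)
From HB Require Import structures.
From mathcomp Require Import all_boot all_order all_algebra.
From mathcomp Require Import all_classical all_reals all_analysis.
Set Implicit Arguments. Unset Strict Implicit. Unset Printing Implicit Defensive.
Import Order.TTheory GRing.Theory Num.Theory.
Import numFieldNormedType.Exports.
Local Open Scope classical_set_scope.
Local Open Scope ring_scope.

Section Defs.
Context {R : realType} {d : measure_display} {T : measurableType d}.

Definition is_sub_sigma_algebra (C : set (set T)) : Prop :=
  sigma_algebra setT C /\ (forall A, C A -> measurable A).

Definition C_measurable (C : set (set T)) (f : T -> R) : Prop :=
  forall B : set R, measurable B -> C (f @^-1` B).

Definition distr_fun (P : probability T R) (X : T -> R) (x : R) : R :=
  fine (P [set w | X w <= x]).

Definition quantile (F : R -> R) (p : R) : R := inf [set x | p <= F x].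

Definition is_distribution_function (H : R -> R) : Prop :=
  {homo H : x y / x <= y} /\
  (forall x, H x @[y --> x^'+] --> H x) /\
  (H @ -oo --> (0:R)) /\ (H @ +oo --> (1:R)).

Definition cond_exp_version (P : probability T R) (C : set (set T))
    (W Z : T -> R) : Prop :=
  C_measurable C Z /\ P.-integrable setT (EFin \o Z) /\
  forall A, C A -> (\int[P]_(w in A) (Z w)%:E = \int[P]_(w in A) (W w)%:E)%E.

Definition regular_cond_distr_fun (P : probability T R) (C : set (set T))
    (X : T -> R) (G : R -> T -> R) : Prop :=
  (forall w, is_distribution_function (fun y => G y w)) /\
  (forall y, cond_exp_version P C (fun w => (if X w <= y then 1 else 0)) (G y)).

Definition cmod (a b : R) : R := Num.sqrt (a ^+ 2 + b ^+ 2).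

(** |Psi_a(t)| where Psi_a(t) = a e^{it} + 1 - a *)
Definition Psi_abs (a t : R) : R := cmod (a * cos t + 1 - a) (a * sin t).

End Defs.

(* Main.v *)
Require Import Defs.
From HB Require Import structures.
From mathcomp Require Import all_boot all_order all_algebra.
From mathcomp Require Import all_classical all_reals all_analysis.
From mathcomp Require Import measurable_realfun.
From mathcomp Require Import ring lra.
Import Order.TTheory GRing.Theory Num.Theory.
Import numFieldNormedType.Exports.
Local Open Scope classical_set_scope.
Local Open Scope ring_scope.

Section H.
Context {R : realType} {d : measure_display} {T : measurableType d}.
Variable P : probability T R.

Lemma bint (A : set T) (f : T -> R) (M : R) : measurable A -> measurable_fun A f ->
  (forall w, `|f w| <= M) -> P.-integrable A (EFin \o f).
Proof.
move=> mA mf fM; apply: (@le_integrable _ _ _ _ _ _ _ (EFin \o cst M)) => //.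
- exact/measurable_EFinP.
- move=> x _ /=; rewrite lee_fin (le_trans (fM x)) // ler_norm //.
- exact: finite_measure_integrable_cst.
Qed.

Lemma CmeasP (C : set (set T)) (f : T -> R) : sigma_algebra setT C ->
  C_measurable C f <-> @measurable_fun _ _ (g_sigma_algebraType C) R setT f.
Proof.
move=> sC; split.
- move=> hf _ B mB; rewrite setTI.
  by rewrite /measurable /= (sigma_algebra_id sC); exact: hf.
- move=> hf B mB; have := hf measurableT B mB; rewrite setTI.
  by rewrite /measurable /= (sigma_algebra_id sC).
Qed.

Local Open Scope ereal_scope.

Lemma Cmeas_meas (C : set (set T)) (f : T -> R) : is_sub_sigma_algebra C ->
  C_measurable C f -> measurable_fun setT f.
Proof. by move=> [_ CS] hf _ B mB; rewrite setTI; apply: CS; exact: hf. Qed.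

Lemma cond_uniq (C : set (set T)) (Z1 Z2 : T -> R) : is_sub_sigma_algebra C ->
  C_measurable C Z1 -> C_measurable C Z2 ->
  P.-integrable setT (EFin \o Z1) -> P.-integrable setT (EFin \o Z2) ->
  (forall A, C A -> \int[P]_(w in A) (Z1 w)%:E = \int[P]_(w in A) (Z2 w)%:E) ->
  ae_eq P setT (EFin \o Z1) (EFin \o Z2).
Proof.
move=> hC m1 m2 i1 i2 eqA.
have [sC CS] := hC.
pose D w := (Z1 w - Z2 w)%R.
have mD : C_measurable C D.
  apply/(CmeasP _ _ sC); apply: measurable_funB; exact/(CmeasP _ _ sC).
have mDT : measurable_fun setT D by exact: (Cmeas_meas _ _ hC mD).
pose Ap := D @^-1` `[0%R, +oo[.
pose An := D @^-1` `]-oo, 0%R[.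
have CAp : C Ap by apply: mD.
have CAn : C An by apply: mD.
have mAp := CS _ CAp; have mAn := CS _ CAn.
have ApAn : Ap `|` An = setT.
  apply/seteqP; split => // w _; rewrite /Ap /An /=.
  by case: (leP 0%R (D w)) => h; [left|right]; rewrite /= in_itv /= ?h.
have h0 : \int[P]_(w in setT) `|(EFin \o D) w| = 0.
  rewrite -ApAn (ge0_integral_setU _ mAp mAn); last 3 first.
  - rewrite ApAn; apply: measurableT_comp => //; exact/measurable_EFinP.
  - by [].
  - apply/disj_setPS => w [] /=; rewrite /Ap /An /= => h1 h2; move: h1 h2; rewrite !in_itv /= andbT => h1 h2.
    by move: (le_lt_trans h1 h2); rewrite ltxx.
  have -> : \int[P]_(x in Ap) `|(EFin \o D) x| = \int[P]_(x in Ap) ((Z1 x)%:E - (Z2 x)%:E).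
    apply: eq_integral => w /set_mem; rewrite /Ap /An /= in_itv /= andbT => h.
    by rewrite ger0_norm.
  have -> : \int[P]_(x in An) `|(EFin \o D) x| = \int[P]_(x in An) ((Z2 x)%:E - (Z1 x)%:E).
    apply: eq_integral => w /set_mem; rewrite /Ap /An /= in_itv /= => h.
    by rewrite ltr0_norm // opprB.
  rewrite !integralB_EFin //; try by apply: integrableS i1 || apply: integrableS i2.
  rewrite !eqA // !subee ?adde0 //;
  by apply: integrable_fin_num => //; exact: integrableS i2.
have mED : measurable_fun setT (EFin \o D) by exact/measurable_EFinP.
have [/(_ h0) h _] := ae_eq_integral_abs P measurableT mED.
apply: filterS h => w /= h Tw; have := h Tw; rewrite /D => -[] /eqP.
by rewrite subr_eq0 => /eqP ->.
Qed.
Local Close Scope ereal_scope.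

Lemma df01 (H : R -> R) : is_distribution_function H -> forall y, 0 <= H y <= 1.
Proof.
move=> [hm [_ [h0 h1]]] y; apply/andP; split.
- rewrite leNgt; apply/negP => hy.
  have A : \forall t \near -oo, H y < H t by apply: cvgr_gt h0 _ hy.
  have B := nbhs_ninfty_le (num_real y).
  have [t [h2 h3]] := filter_ex (filterI A B).
  by move: (hm _ _ h3); rewrite leNgt h2.
- rewrite leNgt; apply/negP => hy.
  have A : \forall t \near +oo, H t < H y by apply: cvgr_lt h1 _ hy.
  have B := nbhs_pinfty_ge (num_real y).
  have [t [h2 h3]] := filter_ex (filterI A B).
  by move: (hm _ _ h3); rewrite leNgt h2.
Qed.

Lemma psi_sq (a t : R) : (a * cos t + 1 - a) ^+ 2 + (a * sin t) ^+ 2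
  = 1 - 2 * (a * (1 - a)) * (1 - cos t).
Proof.
by rewrite exprMn sin2cos2; ring.
Qed.

Lemma psi_le1 (a t : R) : 0 <= a <= 1 -> Psi_abs a t <= 1.
Proof.
move=> /andP[a0 a1]; rewrite /Psi_abs /cmod psi_sq -[X in _ <= X]sqrtr1 ler_sqrt //.
have c1 : cos t <= 1 by have := cos_le1 t.
have : 0 <= a * (1 - a) by apply: mulr_ge0; lra.
nra.
Qed.

Lemma psi_mid (a e t : R) : e <= a <= 1 - e -> Psi_abs a t <= Psi_abs e t.
Proof.
move=> /andP[a0 a1]; rewrite /Psi_abs /cmod !psi_sq ler_sqrt //; last first.
  by rewrite -psi_sq; apply: addr_ge0; apply: sqr_ge0.
have c1 : cos t <= 1 by have := cos_le1 t.
have : e * (1 - e) <= a * (1 - a) by nra.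
nra.
Qed.
Local Open Scope ereal_scope.

Lemma int_affine (A : set T) (f : T -> R) (a b : R) : measurable A ->
  P.-integrable A (EFin \o f) ->
  \int[P]_(w in A) (a + b * f w)%:E = a%:E * P A + b%:E * \int[P]_(w in A) (f w)%:E.
Proof.
move=> mA fi.
under eq_integral => w _ do rewrite EFinD EFinM.
rewrite integralD //; last exact: integrableZl.
  by rewrite integral_cst // integralZl.
exact: (finite_measure_integrable_cst P a mA).
Qed.

Lemma int_affine2 (A : set T) (f g : T -> R) (a b c : R) : measurable A ->
  P.-integrable A (EFin \o f) -> P.-integrable A (EFin \o g) ->
  \int[P]_(w in A) (a + b * f w + c * g w)%:E =
  a%:E * P A + b%:E * \int[P]_(w in A) (f w)%:E + c%:E * \int[P]_(w in A) (g w)%:E.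
Proof.
move=> mA fi gi.
under eq_integral => w _ do rewrite EFinD.
have i1 : P.-integrable A (fun w => (a + b * f w)%:E).
  have := integrableD mA (finite_measure_integrable_cst P a mA) (integrableZl mA b fi).
  by apply: eq_integrable => // w _ /=; rewrite EFinD EFinM.
have i2 : P.-integrable A (fun w => (c * g w)%:E).
  have := integrableZl mA c gi.
  by apply: eq_integrable => // w _ /=; rewrite EFinM.
rewrite (integralD mA i1 i2) int_affine //; congr (_ + _).
by under eq_integral do rewrite EFinM; rewrite integralZl.
Qed.

Lemma int_indic (A : set T) : measurable A ->
  P.-integrable setT (EFin \o (\1_A : T -> R)) /\
  \int[P]_w (\1_A w)%:E = P A.
Proof.
move=> mA; split; first exact: integrable_indic.
by rewrite integral_indic // setIT.
Qed.
Local Close Scope ereal_scope.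

Definition pr (A : set T) : R := fine (P A).

Lemma prE (A : set T) : measurable A -> P A = (pr A)%:E.
Proof. by move=> mA; rewrite /pr fineK // fin_num_measure. Qed.

Lemma pr_le (A B : set T) : measurable A -> measurable B -> A `<=` B -> pr A <= pr B.
Proof.
move=> mA mB AB; rewrite -lee_fin -!prE //; by apply: le_measure; rewrite ?inE.
Qed.

Lemma pr_ge0 (A : set T) : measurable A -> 0 <= pr A.
Proof. by move=> mA; rewrite -lee_fin -prE //; exact: measure_ge0. Qed.

Lemma pr_le1 (A : set T) : measurable A -> pr A <= 1.
Proof.
move=> mA; rewrite -lee_fin -prE // -(probability_setT P); by apply: le_measure; rewrite ?inE.
Qed.

Lemma dec_lim (E : nat -> set T) : (forall n, measurable (E n)) ->
  (forall n m, (n <= m)%N -> E m `<=` E n) ->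
  (fun n => pr (E n)) @ \oo --> pr (\bigcap_n E n).
Proof.
move=> mE dE.
have mI : measurable (\bigcap_n E n) by exact: bigcapT_measurable.
have h : (P \o E) @ \oo --> P (\bigcap_n E n).
  apply: nonincreasing_cvg_mu => //.
  - by rewrite /= prE // ltry.
  - by move=> n m nm; apply/subsetPset; exact: dE.
rewrite prE // in h; exact: (fine_cvg h).
Qed.

Lemma inc_lim (E : nat -> set T) : (forall n, measurable (E n)) ->
  (forall n m, (n <= m)%N -> E n `<=` E m) ->
  (fun n => pr (E n)) @ \oo --> pr (\bigcup_n E n).
Proof.
move=> mE dE.
have mI : measurable (\bigcup_n E n) by exact: bigcupT_measurable.
have h : (P \o E) @ \oo --> P (\bigcup_n E n).
  apply: nondecreasing_cvg_mu => //.
  by move=> n m nm; apply/subsetPset; exact: dE.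
rewrite prE // in h; exact: (fine_cvg h).
Qed.

Lemma mle (X : T -> R) (x : R) : measurable_fun setT X -> measurable [set w | X w <= x].
Proof.
move=> mX; have := mX measurableT _ (measurable_itv `]-oo, x]).
by rewrite setTI; congr measurable; apply/seteqP; split => w /=; rewrite in_itv.
Qed.

Lemma mlt (f : T -> R) (x : R) : measurable_fun setT f -> measurable [set w | x < f w].
Proof.
move=> mX; have := mX measurableT _ (measurable_itv `]x, +oo[).
by rewrite setTI; congr measurable; apply/seteqP; split => w /=; rewrite in_itv /= andbT.
Qed.

Lemma F_le (X : T -> R) x y : measurable_fun setT X -> x <= y ->
  distr_fun P X x <= distr_fun P X y.
Proof.
move=> mX xy; apply: pr_le; try exact: mle.
by move=> w /= h; apply: le_trans h xy.
Qed.

Lemma quantile_ge (X : T -> R) (p : R) : measurable_fun setT X -> 0 < p < 1 ->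
  {for quantile (distr_fun P X) p, continuous (distr_fun P X)} ->
  p <= distr_fun P X (quantile (distr_fun P X) p).
Proof.
move=> mX /andP[p0 p1] cF.
set F := distr_fun P X.
set S := [set x | p <= F x].
have ne : S !=set0.
  pose E n := [set w | X w <= n%:R].
  have hom : forall n m, (n <= m)%N -> E n `<=` E m.
    by move=> n m nm w; rewrite /E /= => h2; apply: le_trans h2 _; rewrite ler_nat.
  have h := @inc_lim E (fun n => mle X n%:R mX) hom.
  have : \bigcup_n E n = setT.
    apply/seteqP; split => // w _; exists (Num.truncn `|X w|).+1 => //.
    rewrite /E /=; apply: ltW; apply: le_lt_trans (truncnS_gt _).
    exact: ler_norm.
  move=> U; rewrite U in h.
  have h1 : pr setT = 1 by rewrite /pr probability_setT.
  rewrite h1 in h.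
  have : \forall n \near \oo, p < pr (E n) by apply: cvgr_gt h _ p1.
  move=> /filter_ex [n hn]; exists n%:R; exact: ltW.
have lb : has_lbound S.
  pose E n := [set w | X w <= - n%:R].
  have hom : forall n m, (n <= m)%N -> E m `<=` E n.
    by move=> n m nm w; rewrite /E /= => h2; apply: le_trans h2 _; rewrite lerN2 ler_nat.
  have h := @dec_lim E (fun n => mle X (- n%:R) mX) hom.
  have : \bigcap_n E n = set0.
    apply/seteqP; split => // w /= hw.
    have := hw (Num.truncn `|X w|).+1 I; rewrite /E /=.
    have := truncnS_gt `|X w|; have := ler_norm (- X w); rewrite normrN.
    lra.
  move=> U; rewrite U in h.
  have h1 : pr set0 = 0 by rewrite /pr measure0.
  rewrite h1 in h.
  have : \forall n \near \oo, pr (E n) < p by apply: cvgr_lt h _ p0.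
  move=> /filter_ex [n hn]; exists (- n%:R) => x Sx.
  rewrite leNgt; apply/negP => xn.
  have : F x <= pr (E n) by apply: pr_le; [exact: mle| exact: mle| move=> w /= hw; rewrite /E /=; lra].
  rewrite /S /= in Sx; lra.
have hinf : has_inf S by split.
rewrite leNgt; apply/negP => Fq.
have : \forall x \near quantile F p, F x < p by apply: cvgr_lt cF _ Fq.
move=> /nbhs_ballP [e /= e0 He].
have [x Sx xe] := inf_adherent e0 hinf.
have qx : quantile F p <= x by apply: ge_inf.
have : F x < p.
  have qE : quantile F p = inf S by [].
  apply: He; rewrite /ball /= distrC ger0_norm; lra.
rewrite /S /= in Sx; lra.
Qed.

Lemma integrable_affine (A : set T) (f : T -> R) (a b : R) : measurable A ->
  P.-integrable A (EFin \o f) -> P.-integrable A (fun w => (a + b * f w)%:E).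
Proof.
move=> mA fi.
have := integrableD mA (finite_measure_integrable_cst P a mA) (integrableZl mA b fi).
by apply: eq_integrable => // w _ /=; rewrite EFinD EFinM.
Qed.

Lemma mcmod (f g : T -> R) : measurable_fun setT f -> measurable_fun setT g ->
  measurable_fun setT (fun w => cmod (f w) (g w)).
Proof.
move=> mf mg; rewrite /cmod.
apply: (@measurableT_comp _ _ _ _ _ _ (@Num.sqrt R)).
  exact: continuous_measurable_fun (@sqrt_continuous R).
by apply: measurable_funD; apply: measurable_funX.
Qed.

Lemma small_inv (c : R) : 0 < c -> \forall n \near \oo, (n.+1%:R)^-1 < c.
Proof.
move=> c0; exists (Num.truncn c^-1) => // n /= hn.
rewrite -(invrK c) ltf_pV2 ?posrE ?invr_gt0 //.
apply: lt_le_trans (truncnS_gt _) _; rewrite ler_nat ltnS; exact: hn.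
Qed.

Lemma sigT_C (C : set (set T)) : is_sub_sigma_algebra C -> C setT.
Proof.
move=> [[C0 CD _] _]; have := CD set0 C0; by rewrite setD0.
Qed.

Lemma indE (X : T -> R) (y : R) :
  (fun w => if X w <= y then 1 else 0 : R) = \1_[set w | X w <= y].
Proof.
apply/funext => w; rewrite indicE; case: ifPn => h.
  by rewrite mem_set.
by rewrite memNset //= ; apply/negP.
Qed.
End H.


Section H2.
Context {R : realType} {d : measure_display} {T : measurableType d}.
Variable P : probability T R.

Lemma integrable_affine2 (A : set T) (f g : T -> R) (a b c : R) : measurable A ->
  P.-integrable A (EFin \o f) -> P.-integrable A (EFin \o g) ->
  P.-integrable A (fun w => (a + b * f w + c * g w)%:E).
Proof.
move=> mA fi gi.
have := integrableD mA (integrable_affine P A f a b mA fi) (integrableZl mA c gi).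
by apply: eq_integrable => // w _ /=; rewrite EFinD EFinM.
Qed.

Lemma indic01 (A : set T) w : 0 <= \1_A w :> R /\ \1_A w <= 1 :> R.
Proof. by rewrite indicE; case: (w \in A) => /=; split. Qed.

Lemma indic_in (A : set T) w : A w -> \1_A w = 1 :> R.
Proof. by move=> h; rewrite indicE mem_set. Qed.

Lemma indic_out (A : set T) w : ~ A w -> \1_A w = 0 :> R.
Proof. by move=> h; rewrite indicE memNset. Qed.

Lemma iindic (A : set T) : measurable A -> P.-integrable setT (EFin \o (\1_A : T -> R)).
Proof. by move=> mA; apply: integrable_indic. Qed.

Lemma int_indic1 (A : set T) : measurable A -> (\int[P]_w (\1_A w)%:E = (pr P A)%:E)%E.
Proof. by move=> mA; rewrite integral_indic // setIT -prE. Qed.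
End H2.

Theorem lemma3p3 (R : realType) (d : measure_display) (T : measurableType d)
  (P : probability T R) (X : T -> R) (p : R)
  (C : set (set T)) (G : R -> T -> R) :
  measurable_fun setT X ->
  0 < p < 1 ->
  {for quantile (distr_fun P X) p, continuous (distr_fun P X)} ->
  is_sub_sigma_algebra C ->
  regular_cond_distr_fun P C X G ->
  (P [set w | G (quantile (distr_fun P X) p) w = 1%R] < p%:E)%E ->
  exists delta eps : R,
    (0 < delta < 1) /\ (0 < eps < 1) /\
    forall t y : R, `|y - quantile (distr_fun P X) p| <= delta ->
      forall Zr Zi : T -> R,
        cond_exp_version P C (fun w => cos (t * (if X w <= y then 1 else 0))) Zr ->
        cond_exp_version P C (fun w => sin (t * (if X w <= y then 1 else 0))) Zi ->
        (\int[P]_w (cmod (Zr w) (Zi w))%:E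
           <= (1 - (1 - Psi_abs eps t) * delta)%R%:E)%E.
Proof.
move=> mX p01 cF hC [Gdf Gce] gp.
have Fxi : p <= distr_fun P X (quantile (distr_fun P X) p) by exact: quantile_ge.
move: Fxi gp cF.
set xi := quantile (distr_fun P X) p.
set F := distr_fun P X => Fxi gp cF.
have G01 : forall y w, 0 <= G y w <= 1 by move=> y w; exact: (df01 _ (Gdf w) y).
have Gmo : forall w y z, y <= z -> G y w <= G z w by move=> w; case: (Gdf w).
have mG : forall y, measurable_fun setT (G y).
  by move=> y; apply: (Cmeas_meas _ _ hC); case: (Gce y).
pose S1 := [set w | G xi w = 1].
have mS1 : measurable S1.
  by have := mG xi measurableT _ (measurable_set1 (1:R)); rewrite setTI.
set g := pr P S1.
have gp' : g < p by rewrite -lte_fin -prE.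
set eta := (p - g) / 3.
have eta0 : 0 < eta by rewrite /eta; lra.
pose e (n : nat) : R := (n.+1%:R)^-1.
have e0 : forall n, 0 < e n by move=> n; rewrite /e invr_gt0.
have emo : forall n m, (n <= m)%N -> e m <= e n.
  by move=> n m nm; rewrite /e lef_pV2 ?posrE // ler_nat ltnS.
pose B n := [set w | 1 - 2 * e n < G xi w].
have mB : forall n, measurable (B n) by move=> n; exact: mlt (mG _).
have decB : forall n m, (n <= m)%N -> B m `<=` B n.
  move=> n m nm w; rewrite /B /= => h.
  have := emo _ _ nm; lra.
have capB : \bigcap_n B n `<=` S1.
  move=> w hw; rewrite /S1 /=.
  have /andP[_ G1] := G01 xi w.
  apply/eqP; rewrite eq_le G1 /= leNgt; apply/negP => Glt.
  have : 0 < (1 - G xi w) / 2 by lra.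
  move=> /small_inv /filter_ex [n hn].
  have := hw n I; rewrite /B /= => hB.
  move: hn; rewrite -/(e n) => hn; lra.
have limB := dec_lim P B mB decB.
have ev1 : \forall n \near \oo, pr P (B n) < g + eta.
  apply: (@cvgr_lt _ _ _ _ (fun n => pr P (B n)) _ limB).
  have := pr_le P _ _ (bigcapT_measurable mB) mS1 capB; rewrite -/g; lra.
have ev2 : \forall n \near \oo, e n < eta / 8 by apply: small_inv; lra.
have ev3 : \forall n \near \oo, (1 <= n)%N by exists 1%N.
have [n [[hn1 hn2] hn3]] := filter_ex (filterI (filterI ev1 ev2) ev3).
have en2 : e n <= 1/2.
  rewrite /e mul1r lef_pV2 ?posrE // ler_nat ltnS //.
have en0 := e0 n.
set eps := e n in hn1 hn2 en2 en0.
have : \forall x \near xi, `|F xi - F x| < eps * eta.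
  by apply: (@cvgr_dist_lt _ _ _ _ _ F (F xi) cF); apply: mulr_gt0.
move=> /nbhs_ballP [e1 /= e10 He1].
have FE : forall y, (F y)%:E = (\int[P]_w (G y w)%:E)%E.
  move=> y; have [_ [_ h]] := Gce y.
  rewrite (h _ (sigT_C _ hC)).
  rewrite (eq_integral (fun w => (\1_[set w | X w <= y] w : R)%:E)); last first.
    by move=> w _; congr EFin; exact: (congr1 (fun f => f w) (indE X y)).
  rewrite int_indic1 //; exact: mle.
have Gi : forall y, P.-integrable setT (EFin \o G y) by move=> y; case: (Gce y) => _ [].
exists (Num.min eps (e1/2)), eps.
set del := Num.min eps (e1/2).
have del0 : 0 < del by rewrite lt_min en0 /=; lra.
have dle1 : del <= eps by rewrite ge_min lexx.
have dle2 : del <= e1 / 2 by rewrite ge_min lexx orbT.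
split; first by apply/andP; split; lra.
split; first by apply/andP; split; lra.
move=> t y hy Zr Zi hr hi.
move: hy; rewrite ler_norml => /andP[hy1 hy2].
have Fy : F xi - eps * eta < F y.
  have := He1 y; rewrite /ball /= => /(_ _) H.
  have := H ltac:(rewrite distrC ltr_norml; apply/andP; split; lra).
  rewrite ltr_norml => /andP[_ ?]; lra.
have Fd : F (xi + del) - F xi < eps * eta.
  have := He1 (xi + del); rewrite /ball /= => /(_ _) H.
  have := H ltac:(rewrite opprD addNKr normrN ger0_norm; lra).
  rewrite ltr_norml => /andP[? _]; lra.
have hyx : y <= xi + del by lra.
pose A := B n.
have mA : measurable A := mB n.
pose M := [set w | eps <= G y w <= 1 - eps].
have mM : measurable M.
  have := mG y measurableT _ (measurable_itv `[eps, 1 - eps]); rewrite setTI.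
  by congr measurable; apply/seteqP; split => w /=; rewrite in_itv.
pose D w := G (xi + del) w - G xi w.
have ek : eps^-1 * eps = 1 by rewrite mulVf // gt_eqF.
have ek0 : 0 < eps^-1 by rewrite invr_gt0.
have pw : forall w, G y w <= eps + 1 * (\1_A w + \1_M w) + eps^-1 * D w.
  move=> w.
  have /andP[Gy0 Gy1] := G01 y w; have /andP[Gd0 Gd1] := G01 (xi + del) w.
  have /andP[Gx0 Gx1] := G01 xi w.
  have m1 := Gmo w _ _ hyx; have m2 := Gmo w xi (xi + del) ltac:(lra).
  have [iA0 iA1] := indic01 (R:=R) A w; have [iM0 iM1] := indic01 (R:=R) M w.
  have D0 : 0 <= eps^-1 * D w by apply: mulr_ge0; rewrite /D; lra.
  have [hM|hM] := pselect (M w).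
    rewrite (indic_in (R:=R) M w hM); lra.
  have : G y w < eps \/ 1 - eps < G y w.
    move: hM; rewrite /M /= => hM.
    case: (ltP (G y w) eps) => h1; first by left.
    case: (ltP (1 - eps) (G y w)) => h2; first by right.
    by exfalso; apply: hM; rewrite h1 h2.
  case => hG; first lra.
  have [hA|hA] := pselect (A w).
    rewrite (indic_in (R:=R) A w hA); lra.
  have : G xi w <= 1 - 2 * eps.
    by move: hA; rewrite /A /B /= -/eps => /negP; rewrite -leNgt.
  move=> hx; have : eps <= D w by rewrite /D; lra.
  move=> hD; have : 1 <= eps^-1 * D w by rewrite -ek ler_pM2l.
  lra.
have iA := iindic P A mA; have iM := iindic P M mM.
have ifA : P.-integrable setT (EFin \o (fun w => \1_A w + \1_M w : R)).
  have := integrable_affine2 P _ _ _ 0 1 1 measurableT iA iM.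
  by apply: eq_integrable => // w _ /=; congr EFin; ring.
have iD : P.-integrable setT (EFin \o D).
  have := integrable_affine2 P _ _ _ 0 1 (-1) measurableT (Gi (xi + del)) (Gi xi).
  by apply: eq_integrable => // w _ /=; congr EFin; rewrite /D; ring.
have fAE : (\int[P]_w ((\1_A w + \1_M w)%:E) = (pr P A + pr P M)%:E)%E.
  rewrite (eq_integral (fun w => (0 + 1 * \1_A w + 1 * \1_M w)%:E)); last first.
    by move=> w _; congr EFin; ring.
  rewrite int_affine2 // !int_indic1 // probability_setT -!EFinM -!EFinD.
  by congr EFin; ring.
have DE : (\int[P]_w ((D w)%:E) = (F (xi + del) - F xi)%:E)%E.
  rewrite (eq_integral (fun w => (0 + 1 * G (xi + del) w + (-1) * G xi w)%:E)); last first.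
    by move=> w _; congr EFin; rewrite /D; ring.
  rewrite int_affine2 // -!FE probability_setT -!EFinM -!EFinD.
  by congr EFin; ring.
have hle : F y <= eps + (pr P A + pr P M) + eps^-1 * (F (xi + del) - F xi).
  rewrite -lee_fin FE.
  have := @le_integral _ _ _ P setT measurableT (fun w => (G y w)%:E)
     (fun w => (eps + 1 * (\1_A w + \1_M w) + eps^-1 * D w)%:E) (Gi y)
     (integrable_affine2 P _ _ _ eps 1 (eps^-1) measurableT ifA iD).
  move=> /(_ _) H; have := H ltac:(by move=> w _; rewrite lee_fin).
  rewrite int_affine2 // fAE DE probability_setT -!EFinM -!EFinD.
  by rewrite mulr1 mul1r.
have hA' : pr P A < g + eta := hn1.
have hk : eps^-1 * (F (xi + del) - F xi) < eta.
  have : eps^-1 * (F (xi + del) - F xi) < eps^-1 * (eps * eta).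
    by rewrite ltr_pM2l.
  by rewrite mulrA ek mul1r.
have eeta : eps * eta <= eta / 2 by nra.
have prM : del <= pr P M.
  have : p = g + 3 * eta by rewrite /eta; field.
  lra.
have [sC CS] := hC.
pose I w : R := if X w <= y then 1 else 0.
have iI : P.-integrable setT (EFin \o I).
  rewrite /I indE; apply: iindic; exact: mle.
have [mGC [_ hGC]] := Gce y.
have mGC' := (CmeasP _ _ sC).1 mGC.
pose Hr w := 1 + (cos t - 1) * G y w.
pose Hi w := 0 + sin t * G y w.
have [mZr [iZr hZr]] := hr.
have [mZi [iZi hZi]] := hi.
have ar : ae_eq P setT (EFin \o Zr) (EFin \o Hr).
  apply: (cond_uniq P C Zr Hr hC mZr) => //.
  - apply/(CmeasP _ _ sC).
    exact: measurable_funD (measurable_cst _) (measurable_funM (measurable_cst _) mGC').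
  - exact: integrable_affine.
  - move=> A0 hA0; have mA0 := CS _ hA0.
    rewrite hZr // (eq_integral (fun w => (1 + (cos t - 1) * I w)%:E)); last first.
      move=> w _; rewrite /I; case: ifP => _; congr EFin.
        by rewrite mulr1; ring.
      by rewrite mulr0 cos0; ring.
    rewrite /Hr !int_affine //; first by rewrite hGC.
    - exact: integrableS (Gi y).
    - exact: integrableS iI.
have ai : ae_eq P setT (EFin \o Zi) (EFin \o Hi).
  apply: (cond_uniq P C Zi Hi hC mZi) => //.
  - apply/(CmeasP _ _ sC).
    exact: measurable_funD (measurable_cst _) (measurable_funM (measurable_cst _) mGC').
  - exact: integrable_affine.
  - move=> A0 hA0; have mA0 := CS _ hA0.
    rewrite hZi // (eq_integral (fun w => (0 + sin t * I w)%:E)); last first.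
      move=> w _; rewrite /I; case: ifP => _; congr EFin.
        by rewrite mulr1; ring.
      by rewrite mulr0 sin0; ring.
    rewrite /Hi !int_affine //; first by rewrite hGC.
    - exact: integrableS (Gi y).
    - exact: integrableS iI.
have ae : ae_eq P setT (fun w => (cmod (Zr w) (Zi w))%:E) (fun w => (Psi_abs (G y w) t)%:E).
  apply: filterS2 ar ai => w h1 h2 Tw.
  move: (h1 Tw) (h2 Tw) => /= [->] [->].
  by rewrite /Psi_abs /Hr /Hi; congr EFin; congr cmod; ring.
have mPsi : measurable_fun setT (fun w => Psi_abs (G y w) t).
  have -> : (fun w => Psi_abs (G y w) t) = (fun w => cmod (Hr w) (Hi w)).
    by apply/funext => w; rewrite /Psi_abs /Hr /Hi; congr cmod; ring.
  apply: mcmod.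
    exact: measurable_funD (measurable_cst _) (measurable_funM (measurable_cst _) (mG y)).
  exact: measurable_funD (measurable_cst _) (measurable_funM (measurable_cst _) (mG y)).
have m1 : measurable_fun setT (fun w => (cmod (Zr w) (Zi w))%:E).
  by apply/measurable_EFinP; apply: mcmod; exact: (Cmeas_meas _ _ hC).
have m2 : measurable_fun setT (fun w => (Psi_abs (G y w) t)%:E).
  exact/measurable_EFinP.
rewrite (ae_eq_integral _ _ measurableT m1 m2 ae).
have psi1 : Psi_abs eps t <= 1 by apply: psi_le1; lra.
have iPsi : P.-integrable setT (EFin \o (fun w => Psi_abs (G y w) t)).
  apply: (bint P _ _ 1 measurableT mPsi) => w.
  rewrite ger0_norm; last exact: sqrtr_ge0.
  exact: psi_le1.
have := @le_integral _ _ _ P setT measurableT (fun w => (Psi_abs (G y w) t)%:E)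
   (fun w => (1 + (Psi_abs eps t - 1) * \1_M w)%:E) iPsi
   (integrable_affine P _ _ 1 (Psi_abs eps t - 1) measurableT iM).
move=> /(_ _) H; have := H ltac:(move=> w _; rewrite lee_fin;
  have [hM|hM] := pselect (M w);
  [rewrite (indic_in (R:=R) M w hM); move: hM; rewrite /M /= => hM;
     have := psi_mid _ _ t hM; lra
  | rewrite (indic_out (R:=R) M w hM) mulr0 addr0; apply: psi_le1; exact: G01]).
rewrite int_affine // int_indic1 // probability_setT -!EFinM -!EFinD.
move=> h2; apply: (le_trans h2); rewrite lee_fin.
have : 0 <= (1 - Psi_abs eps t) * (pr P M - del) by apply: mulr_ge0; lra.
lra.
Qed.
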